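(* Let $\mathbf D$ be a maximal (by inclusion) clique of tilings, i.e. a set of pairwise compatible tilings not properly contained in another set of pairwise compatible tilings. Then $\mathbf D$ is a distributive sublattice of the poset of tilings ordered by inclusion; that is, $\mathbf D$ is closed under $\cap$ and $\cup$.
   Context: Fix an integer $n\ge 3$ and write $[n]=\{1,\dots,n\}$. Let $\Lambda$ be the set of 3-element subsets of $[n]$; a triple $\{i,j,k\}$ with $i<j<k$ is written $ijk$. For a 4-element subset $F=\{i<j<k<l\}$ of $[n]$, the stick of $F$ is the sequence $(ijk,\ ijl,\ ikl,\ jkl)$. A tiling (the inversion set of a rhombus tiling of the zonogon $Z(n;2)$) is a subset $T\subseteq\Lambda$ such that for every 4-element $F\subseteq[n]$, $T\cap\mathrm{stick}(F)$ is an initial segment or a final segment of the stick (empty set and whole stick allowed). Two tilings $T,T'$ are compatible if both $T\cap T'$ and $T\cup T'$ are tilings. *)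

(* Defs.v *)
(* [n] = {1..n} is represented by 'I_n = {0..n-1}
   (order-preserving relabelling i |-> i-1). *)
From mathcomp Require Import all_boot.
Set Implicit Arguments. Unset Strict Implicit. Unset Printing Implicit Defensive.

Section Tilings.
Variable n : nat.

Definition Lambda : {set {set 'I_n}} := [set A : {set 'I_n} | #|A| == 3].

Definition stick (i j k l : 'I_n) : seq {set 'I_n} :=
  [:: [set i; j; k]; [set i; j; l]; [set i; k; l]; [set j; k; l]].

Definition segment_ok (T : {set {set 'I_n}}) (st : seq {set 'I_n}) : Prop :=
  exists m : nat, m <= size st /\
    ([seq x <- st | x \in T] = take m st \/ [seq x <- st | x \in T] = drop m st).

Definition tiling (T : {set {set 'I_n}}) : Prop :=
  T \subset Lambda /\
  forall i j k l : 'I_n, i < j -> j < k -> k < l -> segment_ok T (stick i j k l).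

Definition compatible (T T' : {set {set 'I_n}}) : Prop :=
  tiling (T :&: T') /\ tiling (T :|: T').

Definition clique (D : {set {set {set 'I_n}}}) : Prop :=
  (forall T, T \in D -> tiling T) /\
  (forall T T', T \in D -> T' \in D -> compatible T T').

Definition maximal_clique (D : {set {set {set 'I_n}}}) : Prop :=
  clique D /\ forall D', clique D' -> D \subset D' -> D' = D.

End Tilings.

(* Main.v *)
Require Import Defs.
From mathcomp Require Import all_boot.
Set Implicit Arguments. Unset Strict Implicit. Unset Printing Implicit Defensive.

Definition okpat (a b c d : bool) :=
  ((b ==> a) && (c ==> b) && (d ==> c)) || ((a ==> b) && (b ==> c) && (c ==> d)).

Lemma core (a1 a2 a3 a4 b1 b2 b3 b4 c1 c2 c3 c4 : bool) :
  okpat a1 a2 a3 a4 ==> okpat b1 b2 b3 b4 ==> okpat c1 c2 c3 c4 ==>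
  okpat (a1&&b1) (a2&&b2) (a3&&b3) (a4&&b4) ==>
  okpat (a1||b1) (a2||b2) (a3||b3) (a4||b4) ==>
  okpat (a1&&c1) (a2&&c2) (a3&&c3) (a4&&c4) ==>
  okpat (a1||c1) (a2||c2) (a3||c3) (a4||c4) ==>
  okpat (b1&&c1) (b2&&c2) (b3&&c3) (b4&&c4) ==>
  okpat (b1||c1) (b2||c2) (b3||c3) (b4||c4) ==>
  [&& okpat (a1&&b1&&c1) (a2&&b2&&c2) (a3&&b3&&c3) (a4&&b4&&c4),
      okpat ((a1&&b1)||c1) ((a2&&b2)||c2) ((a3&&b3)||c3) ((a4&&b4)||c4),
      okpat ((a1||b1)&&c1) ((a2||b2)&&c2) ((a3||b3)&&c3) ((a4||b4)&&c4) &
      okpat (a1||b1||c1) (a2||b2||c2) (a3||b3||c3) (a4||b4||c4)].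
Proof. by move: a1 a2 a3 a4 b1 b2 b3 b4 c1 c2 c3 c4; do 12 case. Qed.

Section S.
Variable n : nat.

Ltac witness :=
  first [ by exists 0; split; [|left]
        | by exists 0; split; [|right]
        | by exists 1; split; [|left]
        | by exists 1; split; [|right]
        | by exists 2; split; [|left]
        | by exists 2; split; [|right]
        | by exists 3; split; [|left]
        | by exists 3; split; [|right]
        | by exists 4; split; [|left]
        | by exists 4; split; [|right] ].

Lemma seg_okP (T : {set {set 'I_n}}) x1 x2 x3 x4 :
  uniq [:: x1; x2; x3; x4] ->
  segment_ok T [:: x1; x2; x3; x4] <-> okpat (x1 \in T) (x2 \in T) (x3 \in T) (x4 \in T).
Proof.
move=> U; rewrite /segment_ok /=.
case: (x1 \in T); case: (x2 \in T); case: (x3 \in T); case: (x4 \in T); split;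
 rewrite /okpat /=; try done; try (move=> _; witness);
 case=> m [Hm [E|E]]; case: m Hm E => [|[|[|[|[|m]]]]] //= _ E;
 case: E => *; subst; try congruence;
 by move: U; rewrite /= !inE !eqxx ?orbT ?andbF.
Qed.
End S.

Section M.
Variable n : nat.

Lemma ltF (a b : 'I_n) : a < b -> (a == b) = false /\ (b == a) = false.
Proof. by move=> h; split; [exact: ltn_eqF h | exact: gtn_eqF h]. Qed.

Lemma stick_uniq (i j k l : 'I_n) : i < j -> j < k -> k < l -> uniq (stick i j k l).
Proof.
move=> hij hjk hkl.
have hik : i < k by apply: ltn_trans hjk.
have hjl : j < l by apply: ltn_trans hkl.
have hil : i < l by apply: ltn_trans hjl.
case: (ltF hij) => e1 e2; case: (ltF hjk) => e3 e4; case: (ltF hkl) => e5 e6.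
case: (ltF hik) => e7 e8; case: (ltF hjl) => e9 e10; case: (ltF hil) => e11 e12.
have D (A B : {set 'I_n}) x : x \in A -> x \notin B -> A != B.
  by move=> hA hB; apply: contraNneq hB => <-.
rewrite /stick /= !inE !negb_or.
apply/and4P; split; [apply/and3P; split|apply/andP; split| |done].
all: first [ by apply: (D _ _ i); rewrite !inE ?eqxx ?orbT //= ?e1 ?e2 ?e3 ?e4 ?e5 ?e6 ?e7 ?e8 ?e9 ?e10 ?e11 ?e12
           | by apply: (D _ _ j); rewrite !inE ?eqxx ?orbT //= ?e1 ?e2 ?e3 ?e4 ?e5 ?e6 ?e7 ?e8 ?e9 ?e10 ?e11 ?e12
           | by apply: (D _ _ k); rewrite !inE ?eqxx ?orbT //= ?e1 ?e2 ?e3 ?e4 ?e5 ?e6 ?e7 ?e8 ?e9 ?e10 ?e11 ?e12 ].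
Qed.

Lemma stick_step (T T' S : {set {set 'I_n}}) (st : seq {set 'I_n}) :
  size st = 4 -> uniq st ->
  segment_ok T st -> segment_ok T' st -> segment_ok S st ->
  segment_ok (T :&: T') st -> segment_ok (T :|: T') st ->
  segment_ok (T :&: S) st -> segment_ok (T :|: S) st ->
  segment_ok (T' :&: S) st -> segment_ok (T' :|: S) st ->
  [/\ segment_ok (T :&: T' :&: S) st, segment_ok (T :&: T' :|: S) st,
      segment_ok ((T :|: T') :&: S) st & segment_ok (T :|: T' :|: S) st].
Proof.
case: st => [|x1 [|x2 [|x3 [|x4 [|? ?]]]]] //= _ U.
move=> /(seg_okP _ U) h1 /(seg_okP _ U) h2 /(seg_okP _ U) h3 /(seg_okP _ U) h4
  /(seg_okP _ U) h5 /(seg_okP _ U) h6 /(seg_okP _ U) h7 /(seg_okP _ U) h8 /(seg_okP _ U) h9.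
move: h4 h5 h6 h7 h8 h9; rewrite ?(in_setI, in_setU) => h4 h5 h6 h7 h8 h9.
have := core (x1 \in T) (x2 \in T) (x3 \in T) (x4 \in T)
  (x1 \in T') (x2 \in T') (x3 \in T') (x4 \in T')
  (x1 \in S) (x2 \in S) (x3 \in S) (x4 \in S).
rewrite h1 h2 h3 h4 h5 h6 h7 h8 h9 /= => /and4P [g1 g2 g3 g4].
by split; apply: (proj2 (seg_okP _ U)); rewrite ?(in_setI, in_setU).
Qed.

Lemma tiling_step (T T' S : {set {set 'I_n}}) :
  tiling T -> tiling T' -> tiling S ->
  compatible T T' -> compatible T S -> compatible T' S ->
  [/\ tiling (T :&: T' :&: S), tiling (T :&: T' :|: S),
      tiling ((T :|: T') :&: S) & tiling (T :|: T' :|: S)].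
Proof.
move=> [L1 t1] [L2 t2] [L3 t3] [[_ a1] [_ a2]] [[_ a3] [_ a4]] [[_ a5] [_ a6]].
have SL : forall A B : {set {set 'I_n}}, A \subset Lambda n -> B \subset Lambda n ->
  (A :&: B \subset Lambda n) /\ (A :|: B \subset Lambda n).
  by move=> A B hA hB; split; [apply: subset_trans (subsetIl _ _) hA | rewrite subUset hA hB].
have [I12 U12] := SL _ _ L1 L2.
have [I1 _] := SL _ _ I12 L3. have [_ U1] := SL _ _ I12 L3.
have [I2 _] := SL _ _ U12 L3. have [_ U2] := SL _ _ U12 L3.
have H : forall i j k l : 'I_n, i < j -> j < k -> k < l ->
  [/\ segment_ok (T :&: T' :&: S) (stick i j k l), segment_ok (T :&: T' :|: S) (stick i j k l),
      segment_ok ((T :|: T') :&: S) (stick i j k l) & segment_ok (T :|: T' :|: S) (stick i j k l)].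
  move=> i j k l hij hjk hkl; apply: stick_step => //; first exact: stick_uniq.
  all: try first [exact: (t1 _ _ _ _ hij hjk hkl) | exact: (t2 _ _ _ _ hij hjk hkl)
    | exact: (t3 _ _ _ _ hij hjk hkl) | exact: (a1 _ _ _ _ hij hjk hkl)
    | exact: (a2 _ _ _ _ hij hjk hkl) | exact: (a3 _ _ _ _ hij hjk hkl)
    | exact: (a4 _ _ _ _ hij hjk hkl) | exact: (a5 _ _ _ _ hij hjk hkl)
    | exact: (a6 _ _ _ _ hij hjk hkl)].
split; split; try done; move=> i j k l hij hjk hkl; by case: (H i j k l hij hjk hkl).
Qed.

Lemma tiling_sym_compat (T S : {set {set 'I_n}}) : compatible T S -> compatible S T.
Proof. by rewrite /compatible setIC setUC. Qed.

Lemma add_member (D : {set {set {set 'I_n}}}) (A : {set {set 'I_n}}) :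
  maximal_clique D -> tiling A -> (forall S, S \in D -> compatible A S) -> A \in D.
Proof.
move=> [[tD cD] maxD] tA cA.
have cl : clique (A |: D).
  split.
  - by move=> T; rewrite in_setU1 => /orP [/eqP -> | /tD].
  - move=> T T'; rewrite !in_setU1 => /orP [/eqP -> | hT] /orP [/eqP -> | hT'].
    + by rewrite /compatible setIid setUid.
    + exact: cA.
    + exact/tiling_sym_compat/cA.
    + exact: cD.
have := maxD _ cl (subsetUr _ _) => <-.
by rewrite setU11.
Qed.

End M.

Theorem mainTheorem10 (n : nat) (D : {set {set {set 'I_n}}}) :
  3 <= n -> maximal_clique D ->
  forall T T', T \in D -> T' \in D -> (T :&: T' \in D) /\ (T :|: T' \in D).
Proof.
move=> _ mD T T' hT hT'.
have mD' := mD; case: mD' => [[tD cD] _].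
have cTT' := cD _ _ hT hT'.
split; apply: add_member => //; try by case: cTT'.
- move=> S hS; case: (tiling_step (tD _ hT) (tD _ hT') (tD _ hS) cTT' (cD _ _ hT hS) (cD _ _ hT' hS)).
  by move=> *; split.
- move=> S hS; case: (tiling_step (tD _ hT) (tD _ hT') (tD _ hS) cTT' (cD _ _ hT hS) (cD _ _ hT' hS)).
  by move=> *; split.
Qed.
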